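(* For an orthomodular lattice $\mathbb{L}$ the following are equivalent: (i) $\mathbb{L}$ is distributive; (ii) $\mathcal{Q}_a(\mathbb{L})\cup\mathcal{Q}_b(\mathbb{L})=\mathcal{Q}_{a\vee b}(\mathbb{L})$ for all $a,b\in\mathbb{L}$; (iii) $\mathcal{Q}_a(\mathbb{L})\cup\mathcal{Q}_{a^\perp}(\mathbb{L})=\mathcal{Q}(\mathbb{L})$ for all $a\in\mathbb{L}$; (iv) every subset of the Stone spectrum $\mathcal{Q}(\mathbb{L})$ which is both open and closed is of the form $\mathcal{Q}_a(\mathbb{L})$ for some $a\in\mathbb{L}$.
   Context: An orthomodular lattice is a lattice with least element $0$, greatest element $1$ and a map $a\mapsto a^\perp$ with $a\wedge a^\perp=0$, $a\vee a^\perp=1$, $(a\wedge b)^\perp=a^\perp\vee b^\perp$, $(a\vee b)^\perp=a^\perp\wedge b^\perp$, $a^{\perp\perp}=a$, such that $b\le a$ implies $b=a\wedge(a^\perp\vee b)$. A quasipoint in a lattice $\mathbb{L}$ with least element $0$ is a maximal (w.r.t. inclusion) subset $\mathfrak{B}\subseteq\mathbb{L}$ such that $\mathfrak{B}\neq\emptyset$, $0\notin\mathfrak{B}$, and for all $a,b\in\mathfrak{B}$ there is $c\in\mathfrak{B}$ with $c\le a\wedge b$. $\mathcal{Q}(\mathbb{L})$ denotes the set of quasipoints; for $a\in\mathbb{L}$ put $\mathcal{Q}_a(\mathbb{L})=\{\mathfrak{B}\in\mathcal{Q}(\mathbb{L}) : a\in\mathfrak{B}\}$. The Stone spectrum of $\mathbb{L}$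 is $\mathcal{Q}(\mathbb{L})$ with the topology having the sets $\mathcal{Q}_a(\mathbb{L})$ ($a\in\mathbb{L}$) as a basis. *)

(* Defs.v *)
From HB Require Import structures.
From mathcomp Require Import all_boot all_order.
From mathcomp Require Import boolp classical_sets.
Set Implicit Arguments. Unset Strict Implicit. Unset Printing Implicit Defensive.
Import Order.TTheory.
Local Open Scope order_scope.
Local Open Scope classical_set_scope.

Definition orthomodular (d : Order.disp_t) (L : tbLatticeType d) (perp : L -> L) : Prop :=
  (forall a : L, Order.meet a (perp a) = \bot) /\
  (forall a : L, Order.join a (perp a) = \top) /\
  (forall a b : L, perp (Order.meet a b) = Order.join (perp a) (perp b)) /\
  (forall a b : L, perp (Order.join a b) = Order.meet (perp a) (perp b)) /\
  (forall a : L, perp (perp a) = a) /\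
  (forall a b : L, b <= a -> b = Order.meet a (Order.join (perp a) b)).

Definition distributive_lattice (d : Order.disp_t) (L : tbLatticeType d) : Prop :=
  forall a b c : L, Order.meet a (Order.join b c) = Order.join (Order.meet a b) (Order.meet a c).

Definition filter_base (d : Order.disp_t) (L : tbLatticeType d) (B : set L) : Prop :=
  [/\ B !=set0, ~ B \bot &
      (forall a b, B a -> B b -> exists2 c, B c & c <= Order.meet a b)].

Definition quasipoint (d : Order.disp_t) (L : tbLatticeType d) (B : set L) : Prop :=
  filter_base B /\ (forall C : set L, filter_base C -> B `<=` C -> C = B).

Definition QL (d : Order.disp_t) (L : tbLatticeType d) : set (set L) :=
  [set B | quasipoint B].
Arguments QL {d} L.

Definition Qa (d : Order.disp_t) (L : tbLatticeType d) (a : L) : set (set L) :=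
  [set B | quasipoint B /\ B a].

Definition stone_open (d : Order.disp_t) (L : tbLatticeType d) (U : set (set L)) : Prop :=
  U `<=` QL L /\ exists A : set L, U = \bigcup_(a in A) Qa a.

Definition stone_closed (d : Order.disp_t) (L : tbLatticeType d) (F : set (set L)) : Prop :=
  F `<=` QL L /\ stone_open (QL L `\` F).

Definition stone_clopen (d : Order.disp_t) (L : tbLatticeType d) (U : set (set L)) : Prop :=
  stone_open U /\ stone_closed U.

(* Main.v *)
Require Import Defs.
From HB Require Import structures.
From mathcomp Require Import all_boot all_order.
From mathcomp Require Import boolp classical_sets.
Import Order.TTheory.
Local Open Scope order_scope.
Local Open Scope classical_set_scope.
Set Implicit Arguments. Unset Strict Implicit.

Section OML.
Variables (d : Order.disp_t) (L : tbLatticeType d) (perp : L -> L).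
Hypothesis hL : orthomodular perp.
Local Notation meet := (@Order.meet _ L).
Local Notation join := (@Order.join _ L).

Lemma perpK a : perp (perp a) = a.
Proof. by case: hL => _ [_ [_ [_ [h _]]]]. Qed.
Lemma perpI a b : perp (meet a b) = join (perp a) (perp b).
Proof. by case: hL => _ [_ [h _]]. Qed.
Lemma perpU a b : perp (join a b) = meet (perp a) (perp b).
Proof. by case: hL => _ [_ [_ [h _]]]. Qed.
Lemma meetperp a : meet a (perp a) = \bot.
Proof. by case: hL => h _; apply: h. Qed.
Lemma joinperp a : join a (perp a) = \top.
Proof. by case: hL => _ [h _]. Qed.
Lemma omlaw a b : b <= a -> b = meet a (join (perp a) b).
Proof. by case: hL => _ [_ [_ [_ [_ h]]]]; apply: h. Qed.

Lemma perp0 : perp \bot = \top.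
Proof. by rewrite -(joinperp \bot) join0x. Qed.

Lemma perp_le a b : a <= b -> perp b <= perp a.
Proof. by move=> ab; rewrite -(join_r ab) perpU leIl. Qed.

Lemma oml_dual x y : y <= x -> x = join y (meet (perp y) x).
Proof.
move=> yx; have := omlaw (perp_le yx); rewrite perpK => h.
by rewrite -{1}(perpK x) h perpI perpK perpU perpK.
Qed.

Lemma oml_eq x y : y <= x -> meet (perp y) x = \bot -> x = y.
Proof. by move=> yx h; rewrite (oml_dual yx) h joinx0. Qed.

Section QP.
Variable B : set L.
Hypothesis hB : quasipoint B.

Lemma qp_nbot : ~ B \bot.
Proof. by case: hB => -[]. Qed.

Lemma qp_up a b : B a -> a <= b -> B b.
Proof.
move=> Ba ab.
pose U := [set x | exists2 y, B y & y <= x].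
have fU : filter_base U.
  case: hB => -[[b0 Bb0] nb dir] _; split.
  - by exists b0; exists b0.
  - by move=> [y By]; rewrite lex0 => /eqP y0; apply: nb; rewrite -y0.
  - move=> x1 x2 [y1 B1 l1] [y2 B2 l2].
    have [c Bc lc] := dir _ _ B1 B2.
    exists c; first by exists c.
    exact: le_trans lc (leI2 l1 l2).
have BU : B `<=` U by move=> x Bx; exists x.
case: hB => _ /(_ U fU BU) UB.
by rewrite -UB; exists a.
Qed.

Lemma qp_meet a b : B a -> B b -> B (meet a b).
Proof.
move=> Ba Bb; case: hB => -[_ _ dir] _.
have [c Bc lc] := dir _ _ Ba Bb; exact: qp_up Bc lc.
Qed.

Lemma qp_top : B \top.
Proof. case: hB => -[[b0 Bb0] _ _] _; exact: qp_up Bb0 (lex1 _). Qed.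

Lemma qp_perp a : B a -> B (perp a) -> False.
Proof. by move=> Ba Bpa; apply: qp_nbot; rewrite -(meetperp a); apply: qp_meet. Qed.

Lemma qp_max a : ~ B a -> exists2 b, B b & meet a b = \bot.
Proof.
move=> nBa; case: (pselect (exists2 b, B b & meet a b = \bot)) => // H.
have H' : forall b, B b -> meet a b <> \bot.
  by move=> b Bb e; apply: H; exists b.
pose C := [set x | exists2 b, B b & meet a b <= x].
case: hB => -[[b0 Bb0] nb dir] mx.
have fC : filter_base C.
  split.
  - by exists (meet a b0); exists b0.
  - by move=> [b Bb]; rewrite lex0 => /eqP; apply: H'.
  - move=> x1 x2 [b1 B1 l1] [b2 B2 l2].
    have B12 := qp_meet B1 B2.
    exists (meet a (meet b1 b2)); first by exists (meet b1 b2).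
    rewrite lexI; apply/andP; split.
    + apply: le_trans l1; apply: leI2 => //; exact: leIl.
    + apply: le_trans l2; apply: leI2 => //; exact: leIr.
have BC : B `<=` C by move=> x Bx; exists x => //; exact: leIr.
have CB := mx C fC BC; exfalso; apply: nBa; rewrite -CB; exists b0 => //; exact: leIl.
Qed.

End QP.

Lemma qp_extend (C : set L) : filter_base C -> exists B, quasipoint B /\ C `<=` B.
Proof.
move=> fC.
pose P := [set X : set L | filter_base (C `|` X)].
have [|A [PA mA]] := @Zorn_bigcup L P.
  move=> F FP tot; rewrite /P /=.
  case: fC => [[c0 Cc0] nbC dirC]; split.
  - by exists c0; left.
  - case=> [//|[X FX Xb]].
    by case: (FP X FX) => _ nb _; apply: nb; right.
  - have key : forall X Y a b, F X -> F Y -> (C `|` X) a -> (C `|` Y) b ->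
        exists2 c, (C `|` \bigcup_(X in F) X) c & c <= Order.meet a b.
      move=> X Y a b FX FY Ha Hb.
      case: (tot X Y FX FY) => [XY|YX].
      + have [_ _ dir] := FP Y FY.
        have Ha' : (C `|` Y) a by case: Ha => [?|/XY ?]; [left|right].
        have [c [Cc|Yc] lc] := dir _ _ Ha' Hb; exists c => //; [by left|].
        by right; exists Y.
      + have [_ _ dir] := FP X FX.
        have Hb' : (C `|` X) b by case: Hb => [?|/YX ?]; [left|right].
        have [c [Cc|Xc] lc] := dir _ _ Ha Hb'; exists c => //; [by left|].
        by right; exists X.
    move=> a b [Ca|[X FX Xa]] [Cb|[Y FY Yb]].
    + by have [c Cc lc] := dirC _ _ Ca Cb; exists c => //; left.
    + by apply: (key Y Y) => //; [left|right].
    + by apply: (key X X) => //; [right|left].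
    + by apply: (key X Y) => //; right.
exists (C `|` A); split; last by move=> x Cx; left.
split => // D fD AD.
have PD : P D; rewrite /P /=.
  have -> : C `|` D = D.
    by apply/seteqP; split => x; [case=> // ?; apply: AD; left|move=> ?; right].
  exact: fD.
case: (pselect (D `<=` A)) => [DA|nDA].
  apply/seteqP; split => [x Dx|x /AD //]; by right; apply: DA.
exfalso; apply: (mA D) => //; split => // x Ax; apply: AD; by right.
Qed.

Lemma exists_qp (a : L) : a <> \bot -> exists B, quasipoint B /\ B a.
Proof.
move=> a0; have fC : filter_base [set x | a <= x].
  split.
  - by exists a => /=.
  - by rewrite /= lex0 => /eqP.
  - by move=> x y /= ax ay; exists a => //; rewrite lexI ax ay.
have [B [qB CB]] := qp_extend fC; exists B; split => //; apply: CB; rewrite /=; exact: lexx.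
Qed.

Lemma bot_of_noqp (a : L) : (forall B, quasipoint B -> ~ B a) -> a = \bot.
Proof.
move=> H; case: (pselect (a = \bot)) => // a0.
by have [B [qB Ba]] := exists_qp a0; case: (H B qB Ba).
Qed.

Lemma le_of_Qa (x y : L) : (forall B, quasipoint B -> B x -> B y) -> x <= y.
Proof.
move=> H; case: (pselect (x <= y)) => // nxy; exfalso.
pose z := Order.meet x (perp (Order.meet x y)).
have z0 : z <> \bot.
  move=> z0; apply: nxy.
  have e := oml_eq (leIl x y) (etrans (meetC _ _) z0).
  by rewrite e leIr.
have [B [qB Bz]] := exists_qp z0.
have Bx : B x := qp_up qB Bz (leIl _ _).
have Bp : B (perp (Order.meet x y)) := qp_up qB Bz (leIr _ _).
apply: (qp_perp qB _ Bp); apply: qp_meet => //; exact: H.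
Qed.

Definition condII := forall a b : L, Qa a `|` Qa b = Qa (Order.join a b).
Definition condIII := forall a : L, Qa a `|` Qa (perp a) = QL L.
Definition condIV := forall U : set (set L), U `<=` QL L -> stone_clopen U ->
  exists a : L, U = Qa a.

Lemma Qa_top : Qa (\top : L) = QL L.
Proof.
apply/seteqP; split => B; first by case.
by move=> qB; split => //; exact: qp_top.
Qed.

Lemma D_II : distributive_lattice L -> condII.
Proof.
move=> dis a b; apply/seteqP; split => B.
  case=> -[qB Bx]; split => //; apply: (qp_up qB Bx); [exact: leUl|exact: leUr].
move=> [qB Bab].
case: (pselect (B a)) => [Ba|nBa]; first by left.
case: (pselect (B b)) => [Bb|nBb]; first by right.
exfalso.
have [c1 B1 e1] := qp_max qB nBa.
have [c2 B2 e2] := qp_max qB nBb.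
have Bc := qp_meet qB B1 B2.
have := qp_meet qB Bc Bab; rewrite dis.
have -> : Order.meet (Order.meet c1 c2) a = \bot.
  apply/eqP; rewrite -lex0 -e1 lexI leIr /=.
  exact: le_trans (leIl _ _) (leIl _ _).
have -> : Order.meet (Order.meet c1 c2) b = \bot.
  apply/eqP; rewrite -lex0 -e2 lexI leIr /=.
  exact: le_trans (leIl _ _) (leIr _ _).
rewrite joinx0; exact: qp_nbot qB.
Qed.

Lemma II_III : condII -> condIII.
Proof. by move=> h a; rewrite h joinperp Qa_top. Qed.

Lemma III_II : condIII -> condII.
Proof.
move=> h a b; apply/seteqP; split => B.
  case=> -[qB Bx]; split => //; apply: (qp_up qB Bx); [exact: leUl|exact: leUr].
move=> [qB Bab].
case: (pselect (B a)) => [Ba|nBa]; first by left.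
case: (pselect (B b)) => [Bb|nBb]; first by right.
exfalso.
have Hpa : B (perp a).
  have : QL L B := qB; by rewrite -(h a) => -[[_ /nBa []]|[]].
have Hpb : B (perp b).
  have : QL L B := qB; by rewrite -(h b) => -[[_ /nBb []]|[]].
apply: (qp_perp qB Bab); rewrite perpU; exact: qp_meet.
Qed.

Lemma II_D : condII -> distributive_lattice L.
Proof.
move=> h a b c; apply: le_anti; apply/andP; split.
  apply: le_of_Qa => B qB Bx.
  have Ba : B a := qp_up qB Bx (leIl _ _).
  have Bbc : B (Order.join b c) := qp_up qB Bx (leIr _ _).
  have : Qa (Order.join b c) B by [].
  rewrite -h => -[[_ Bb]|[_ Bc]].
  - exact: (qp_up qB (qp_meet qB Ba Bb) (leUl _ (Order.meet a c))).
  - exact: (qp_up qB (qp_meet qB Ba Bc) (leUr _ _)).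
rewrite leUx !lexI !leIl /=.
by rewrite (le_trans (leIr _ _) (leUl _ _)) (le_trans (leIr _ _) (leUr _ _)).
Qed.

Lemma D_IV : distributive_lattice L -> condIV.
Proof.
move=> dis; have h := D_II dis.
move=> U UQ [[_ [A eA]] [_ [_ [A' eA']]]].
pose SU x := Qa x `<=` U.
pose SV y := Qa y `<=` QL L `\` U.
have SU0 : SU \bot by move=> B [qB Bb]; case: (qp_nbot qB Bb).
have SV0 : SV \bot by move=> B [qB Bb]; case: (qp_nbot qB Bb).
have SUj x1 x2 : SU x1 -> SU x2 -> SU (Order.join x1 x2).
  by rewrite /SU -(h x1 x2) => s1 s2 B [h1|h2]; [exact: s1|exact: s2].
have SVj x1 x2 : SV x1 -> SV x2 -> SV (Order.join x1 x2).
  by rewrite /SV -(h x1 x2) => s1 s2 B [h1|h2]; [exact: s1|exact: s2].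
have [x [y [Sx Sy xy]]] : exists x y, [/\ SU x, SV y & Order.join x y = \top].
  case: (pselect (exists x y, [/\ SU x, SV y & Order.join x y = \top])) => // nex.
  exfalso.
  pose C := [set z | exists x y, [/\ SU x, SV y & perp (Order.join x y) <= z]].
  have fC : filter_base C.
    split.
    - by exists \top, \bot, \bot; split=> //; exact: lex1.
    - move=> [x [y [Sx Sy le]]]; apply: nex; exists x, y; split=>//.
      move: le; rewrite lex0 => /eqP e; by rewrite -(perpK (Order.join x y)) e perp0.
    - move=> z1 z2 [x1 [y1 [S1 T1 l1]]] [x2 [y2 [S2 T2 l2]]].
      exists (perp (Order.join (Order.join x1 x2) (Order.join y1 y2))).
        exists (Order.join x1 x2), (Order.join y1 y2); split => //; [exact: SUj|exact: SVj].
      rewrite lexI; apply/andP; split.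
      + apply: le_trans l1; apply: perp_le; exact: leU2 (leUl _ _) (leUl _ _).
      + apply: le_trans l2; apply: perp_le; exact: leU2 (leUr _ _) (leUr _ _).
  have [Q [qQ CQ]] := qp_extend fC.
  case: (pselect (U Q)) => UQ'.
  - move: (UQ'); rewrite eA => -[a Aa [_ Qa']].
    have Sa : SU a by move=> B Ba; rewrite eA; exists a.
    have : C (perp a) by exists a, \bot; split => //; rewrite joinx0.
    move=> Cpa; have Qpa : Q (perp a) by apply: CQ.
    exact: (qp_perp qQ Qa' Qpa).
  - have VQ : (QL L `\` U) Q by [].
    move: (VQ); rewrite eA' => -[a Aa [_ Qa']].
    have Sa : SV a by move=> B Ba; rewrite eA'; exists a.
    have : C (perp a) by exists \bot, a; split => //; rewrite join0x.
    move=> Cpa; have Qpa : Q (perp a) by apply: CQ.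
    exact: (qp_perp qQ Qa' Qpa).
exists x; apply/seteqP; split => [B UB|]; last exact: Sx.
have qB : QL L B := UQ B UB.
have : Qa (Order.join x y) B by rewrite xy Qa_top.
by rewrite -(h x y) => -[//|/Sy [_ /(_ UB) []]].
Qed.

Lemma IV_III : condIV -> condIII.
Proof.
move=> h4 a.
pose V := QL L `\` Qa a.
have eV : V = \bigcup_(b in [set b | Order.meet a b = \bot]) Qa b.
  apply/seteqP; split => B.
  - move=> [qB nBa].
    have nBa' : ~ B a by move=> Ba; apply: nBa; split.
    have [b Bb e] := qp_max qB nBa'; by exists b.
  - move=> [b /= e [qB Bb]]; split => // -[_ Ba]; apply: (qp_nbot qB); rewrite -e.
    exact: qp_meet.
have VQ : V `<=` QL L by move=> B [].
have cl : stone_clopen V.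
  split; first by split => //; exists [set b | Order.meet a b = \bot].
  split => //; split; first by move=> B [].
  exists [set a]; apply/seteqP; split => B.
  - move=> [qB nVB]; exists a => //; split => //.
    case: (pselect (B a)) => // nBa; exfalso; apply: nVB; split => // -[_ /nBa []].
  - move=> [a' /= -> [qB Ba]]; split => // -[_]; by apply; split.
have [c ec] := h4 V VQ cl.
have pc : perp a <= c.
  apply: le_of_Qa => B qB Bpa.
  have : V B by split => // -[_ Ba]; exact: (qp_perp qB Ba Bpa).
  by rewrite ec => -[_].
have ac : Order.meet a c = \bot.
  apply: bot_of_noqp => B qB Bac.
  have Bc := qp_up qB Bac (leIr _ _).
  have Ba := qp_up qB Bac (leIl _ _).
  have : Qa c B by [].
  by rewrite -ec => -[_]; apply.
have ce : c = perp a by apply: oml_eq pc _; rewrite perpK.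
apply/seteqP; split => B; first by case=> -[].
move=> qB; case: (pselect (B a)) => Ba; first by left.
right; have : V B by split => // -[_].
by rewrite ec ce.
Qed.

End OML.

Unset Implicit Arguments. Set Strict Implicit.

Theorem proposition3p16 (d : Order.disp_t) (L : tbLatticeType d) (perp : L -> L)
  (hL : orthomodular perp) :
  [/\ (distributive_lattice L <->
        forall a b : L, setU (Qa a) (Qa b) = Qa (Order.join a b)),
      (distributive_lattice L <->
        forall a : L, setU (Qa a) (Qa (perp a)) = QL L) &
      (distributive_lattice L <->
        forall U : set (set L), U `<=` QL L -> stone_clopen U ->
          exists a : L, U = Qa a)].
Proof.
have DII := @D_II d L.
have IID := @II_D d L perp hL.
have IIIII := @II_III d L perp hL.
have IIIII' := @III_II d L perp hL.
have DIV := @D_IV d L perp hL.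
have IVIII := @IV_III d L perp hL.
split; split.
- exact: DII.
- exact: IID.
- by move=> D; apply: IIIII; apply: DII.
- by move=> h; apply: IID; apply: IIIII'.
- exact: DIV.
- by move=> h; apply: IID; apply: IIIII'; apply: IVIII.
Qed.
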